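(* Let $\mathfrak{g}$ be a nilpotent Lie algebra over an infinite field $\mathbb{F}$, and let $n$ be a non-negative integer such that $\dim[\mathfrak{g},\mathfrak{g}] > n(n-1)/2$. Then the set $\{x\in\mathfrak{g} : b(x)\ge n\}$ of elements of breadth at least $n$ cannot be covered by (i.e. is not contained in the union of) finitely many proper Lie subalgebras of $\mathfrak{g}$.
   Context: For an element $x$ of a Lie algebra $\mathfrak{g}$ over a field, the centralizer is $C_{\mathfrak{g}}(x)=\{y\in\mathfrak{g} : [x,y]=0\}$, and the breadth of $x$ is $b(x)=\dim\mathfrak{g}-\dim C_{\mathfrak{g}}(x)$, i.e. the codimension of $C_{\mathfrak{g}}(x)$ in $\mathfrak{g}$ (this is a non-negative integer or $\infty$ if $\mathfrak{g}$ is infinite-dimensional). $\mathfrak{g}'=[\mathfrak{g},\mathfrak{g}]$ denotes the derived subalgebra. *)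

(* Defs.v *)
From HB Require Import structures.
From mathcomp Require Import all_boot all_order all_algebra.
Set Implicit Arguments. Unset Strict Implicit. Unset Printing Implicit Defensive.
Import Order.TTheory GRing.Theory Num.Theory.
Local Open Scope ring_scope.

Definition infinite_field (F : fieldType) : Prop :=
  forall s : seq F, exists x : F, x \notin s.

Record is_lie_bracket (F : fieldType) (L : lmodType F) (br : L -> L -> L) : Prop := {
  lie_linl : forall (a : F) (x y z : L), br (a *: x + y) z = a *: br x z + br y z;
  lie_linr : forall (a : F) (x y z : L), br x (a *: y + z) = a *: br x y + br x z;
  lie_alt  : forall x : L, br x x = 0;
  lie_jacobi : forall x y z : L, br x (br y z) + br y (br z x) + br z (br x y) = 0 }.

(* Membership in the lower central series g^1 = g, g^(k+2) = [g, g^(k+1)]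
   (indexed from 0: lcs 0 = g). An element of [g, V] is a finite sum of brackets
   [a, b] with b in V. *)
Fixpoint lcs (F : fieldType) (L : lmodType F) (br : L -> L -> L) (k : nat) (v : L) : Prop :=
  match k with
  | 0 => True
  | k'.+1 => exists s : seq (L * L),
      (forall p, p \in s -> lcs br k' p.2) /\ v = \sum_(p <- s) br p.1 p.2
  end.

Definition nilpotent_lie (F : fieldType) (L : lmodType F) (br : L -> L -> L) : Prop :=
  exists c : nat, forall v : L, lcs br c v -> v = 0.

Definition in_derived (F : fieldType) (L : lmodType F) (br : L -> L -> L) (v : L) : Prop :=
  exists s : seq (L * L), v = \sum_(p <- s) br p.1 p.2.

Definition lin_indep (F : fieldType) (L : lmodType F) (m : nat) (v : 'I_m -> L) : Prop :=
  forall c : 'I_m -> F, \sum_(i < m) c i *: v i = 0 -> forall i, c i = 0.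

(* dim g' > d  (dim may be infinite): g' contains more than d independent vectors. *)
Definition dim_derived_gt (F : fieldType) (L : lmodType F) (br : L -> L -> L) (d : nat) : Prop :=
  exists m : nat, (d < m)%N /\
    exists v : 'I_m -> L, (forall i, in_derived br (v i)) /\ lin_indep v.

(* C_g(x) = {y | [x,y] = 0};  b(x) >= n  iff  codim C_g(x) >= n, i.e. there are
   n vectors linearly independent modulo C_g(x). *)
Definition centralizer (F : fieldType) (L : lmodType F) (br : L -> L -> L) (x : L) : L -> Prop :=
  fun y => br x y = 0.

Definition breadth_ge (F : fieldType) (L : lmodType F) (br : L -> L -> L) (x : L) (n : nat) : Prop :=
  exists y : 'I_n -> L, forall c : 'I_n -> F,
    centralizer br x (\sum_(i < n) c i *: y i) -> forall i, c i = 0.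

Definition lie_subalgebra (F : fieldType) (L : lmodType F) (br : L -> L -> L) (S : L -> Prop) : Prop :=
  [/\ S 0,
      (forall x y, S x -> S y -> S (x + y)),
      (forall (a : F) x, S x -> S (a *: x)) &
      (forall x y, S x -> S y -> S (br x y))].

Definition proper_subset_pred (L : Type) (S : L -> Prop) : Prop := exists x : L, ~ S x.

(* Main.v *)
Require Import Defs.
From HB Require Import structures.
From mathcomp Require Import all_boot all_order all_algebra.
From Stdlib Require Import Classical ClassicalEpsilon.
Set Implicit Arguments. Unset Strict Implicit. Unset Printing Implicit Defensive.
Import GRing.Theory.
Local Open Scope ring_scope.

Section Gen.
Variables (F : fieldType) (L : lmodType F).

Definition lc (K : nat) (g : 'I_K -> L) (r : 'rV[F]_K) : L := \sum_(k < K) r 0 k *: g k.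

Lemma lc_sum K (g : 'I_K -> L) M (lam : 'I_M -> F) (c : 'I_M -> 'rV[F]_K) :
  lc g (\sum_(j < M) lam j *: c j) = \sum_(j < M) lam j *: lc g (c j).
Proof.
rewrite /lc.
under eq_bigr => k _ do rewrite summxE scaler_suml.
rewrite exchange_big /=; apply: eq_bigr => j _.
rewrite scaler_sumr; apply: eq_bigr => k _.
by rewrite mxE scalerA.
Qed.

Lemma lc0 K (g : 'I_K -> L) : lc g 0 = 0.
Proof. by rewrite /lc big1 // => k _; rewrite mxE scale0r. Qed.

Lemma lc_inj K (g : 'I_K -> L) r : lin_indep g -> lc g r = 0 -> r = 0.
Proof.
move=> hg h; apply/matrixP => i k; rewrite mxE (ord1 i).
exact: (hg (fun k => r 0 k)).
Qed.

Lemma rowbound M K (c : 'I_M -> 'rV[F]_K) : lin_indep c -> (M <= K)%N.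
Proof.
move=> hc.
have hf : row_free (\matrix_j c j).
  apply: inj_row_free => v hv.
  apply/matrixP => i j; rewrite (ord1 i) mxE.
  move: hv; rewrite mulmx_sum_row.
  under eq_bigr => k _ do rewrite rowK.
  by move=> /hc ->.
have := rank_leq_col (\matrix_j c j).
by rewrite (eqP hf).
Qed.

Definition fspan K (g : 'I_K -> L) (v : L) := exists r : 'I_K -> F, v = \sum_(k < K) r k *: g k.

Lemma fspan0 K (g : 'I_K -> L) : fspan g 0.
Proof. by exists (fun _ => 0); rewrite big1 // => k _; rewrite scale0r. Qed.

Lemma fspanD K (g : 'I_K -> L) u v : fspan g u -> fspan g v -> fspan g (u + v).
Proof.
move=> [r ->] [s ->]; exists (fun k => r k + s k).
by rewrite -big_split /=; apply: eq_bigr => k _; rewrite scalerDl.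
Qed.

Lemma fspanZ K (g : 'I_K -> L) a v : fspan g v -> fspan g (a *: v).
Proof.
move=> [r ->]; exists (fun k => a * r k).
by rewrite scaler_sumr; apply: eq_bigr => k _; rewrite scalerA.
Qed.

Lemma fspanN K (g : 'I_K -> L) v : fspan g v -> fspan g (- v).
Proof. by move=> h; rewrite -scaleN1r; apply: fspanZ. Qed.

Lemma fspan_mem K (g : 'I_K -> L) k : fspan g (g k).
Proof.
exists (fun j => (j == k)%:R).
rewrite (bigD1 k) //= eqxx scale1r big1 ?addr0 // => j /negbTE ->.
by rewrite scale0r.
Qed.

Lemma fspan_sum K (g : 'I_K -> L) (I : Type) (s : seq I) (P : pred I) (f : I -> L) :
  (forall i, P i -> fspan g (f i)) -> fspan g (\sum_(i <- s | P i) f i).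
Proof.
move=> h; elim: s => [|x s IH]; first by rewrite big_nil; apply: fspan0.
rewrite big_cons; case: ifP => Px //; apply: fspanD => //; exact: h.
Qed.

Lemma fspan_sub K (g : 'I_K -> L) K' (g' : 'I_K' -> L) v :
  (forall k, fspan g' (g k)) -> fspan g v -> fspan g' v.
Proof.
move=> h [r ->]; apply: fspan_sum => k _; apply: fspanZ; exact: h.
Qed.

Lemma fspan_bound M K (w : 'I_M -> L) (g : 'I_K -> L) :
  lin_indep w -> (forall j, fspan g (w j)) -> (M <= K)%N.
Proof.
move=> hw hs.
pose r j := epsilon (inhabits (fun _ : 'I_K => (0 : F)))
               (fun r : 'I_K -> F => w j = \sum_(k < K) r k *: g k).
have hr j : w j = lc g (\row_k r j k).
  rewrite /lc; under eq_bigr => k _ do rewrite mxE.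
  exact: (epsilon_spec _ _ (hs j)).
apply: (@rowbound M K (fun j => \row_k r j k)) => lam hl.
apply: hw; rewrite (eq_bigr (fun i => lam i *: lc g (\row_k r i k))); last by move=> j _; rewrite -hr.
by rewrite -lc_sum hl lc0.
Qed.

Lemma lin_indep_eq M (f g : 'I_M -> L) : (forall i, f i = g i) -> lin_indep f -> lin_indep g.
Proof.
move=> e hf c hc; apply: hf; rewrite -[RHS]hc; apply: eq_bigr => i _; by rewrite e.
Qed.


Lemma eigen_indep N (a b : 'I_N -> L) : lin_indep a ->
  forall M (tt : 'I_M -> F) (rr : 'I_M -> 'rV[F]_N), injective tt ->
  (forall j, rr j != 0) -> (forall j, lc a (rr j) + tt j *: lc b (rr j) = 0) ->
  lin_indep rr.
Proof.
move=> ha; elim => [|M IH] tt rr tinj rnz rel.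
  by move=> c _ [].
have tnz j : tt j != 0.
  apply/negP => /eqP h0; move: (rel j); rewrite h0 scale0r addr0 => /(lc_inj ha) e.
  by move: (rnz j); rewrite e eqxx.
move=> lam hl.
have hA j : lc a (rr j) = - (tt j *: lc b (rr j)).
  by apply/eqP; rewrite -addr_eq0 rel.
have hB : \sum_(j < M.+1) (lam j / tt j) *: rr j = 0.
  apply: (lc_inj ha); rewrite lc_sum.
  have : lc b (\sum_(j < M.+1) lam j *: rr j) = 0 by rewrite hl lc0.
  rewrite lc_sum => hb.
  transitivity (- \sum_(j < M.+1) lam j *: lc b (rr j)); last by rewrite hb oppr0.
  rewrite -sumrN; apply: eq_bigr => j _.
  by rewrite hA scalerN scalerA divfK.
pose t0 := tt ord_max.
have E : \sum_(j < M.+1) (lam j * ((tt j)^-1 - t0^-1)) *: rr j = 0.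
  under eq_bigr => j _ do rewrite mulrBr scalerBl.
  rewrite sumrB hB.
  have -> : \sum_(j < M.+1) (lam j * t0^-1) *: rr j = t0^-1 *: \sum_(j < M.+1) lam j *: rr j.
    by rewrite scaler_sumr; apply: eq_bigr => j _; rewrite scalerA mulrC.
  by rewrite hl scaler0 subrr.
move: E; rewrite big_ord_recr /= subrr mulr0 scale0r addr0 => E.
have hz := IH (fun j => tt (widen_ord (leqnSn M) j)) (fun j => rr (widen_ord (leqnSn M) j)).
have winj : injective (fun j : 'I_M => tt (widen_ord (leqnSn M) j)).
  by move=> x y /tinj /(f_equal (@nat_of_ord _)) /= e; apply: ord_inj.
have hz' := hz winj (fun j => rnz _) (fun j => rel _) _ E.
have lw j : lam (widen_ord (leqnSn M) j) = 0.
  have /eqP := hz' j.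
  rewrite mulf_eq0 => /orP [/eqP //|]; rewrite subr_eq0 => /eqP /invr_inj /tinj e.
  by have := ltn_ord j; rewrite -[X in (X < _)%N]/(nat_of_ord (widen_ord (leqnSn M) j)) e /= ltnn.
have lm : lam ord_max = 0.
  move: hl; rewrite big_ord_recr /= big1 ?add0r; last by move=> j _; rewrite lw scale0r.
  by move/eqP; rewrite scaler_eq0 (negbTE (rnz _)) orbF => /eqP.
move=> i; case: (unliftP ord_max i) => [j ->|->] //.
have -> : lift ord_max j = widen_ord (leqnSn M) j by apply: val_inj; rewrite /= /bump leqNgt ltn_ord.
exact: lw.
Qed.

Lemma bad_wit N (a b : 'I_N -> L) (t : F) :
  ~ lin_indep (fun i => a i + t *: b i) ->
  exists r : 'rV[F]_N, r != 0 /\ lc a r + t *: lc b r = 0.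
Proof.
move=> h; apply: NNPP => hn; apply: h => c hc i; apply: NNPP => hci; apply: hn.
exists (\row_k c k); split.
  by apply/eqP => /matrixP /(_ 0 i); rewrite !mxE.
rewrite /lc -[RHS]hc scaler_sumr -big_split; apply: eq_bigr => k _.
by rewrite !mxE scalerDr !scalerA mulrC.
Qed.

Lemma pert_bound N (a b : 'I_N -> L) : lin_indep a -> forall s : seq F, uniq s ->
  (forall t, t \in s -> ~ lin_indep (fun i => a i + t *: b i)) -> (size s <= N)%N.
Proof.
move=> ha s us hs.
pose tt (j : 'I_(size s)) := nth 0 s j.
have hb j : exists r : 'rV[F]_N, r != 0 /\ lc a r + tt j *: lc b r = 0.
  by apply: bad_wit; apply: hs; rewrite mem_nth.
pose rr j := epsilon (inhabits (0 : 'rV[F]_N))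
   (fun r : 'rV[F]_N => r != 0 /\ lc a r + tt j *: lc b r = 0).
have hr j : rr j != 0 /\ lc a (rr j) + tt j *: lc b (rr j) = 0 by exact: (epsilon_spec _ _ (hb j)).
apply: (@rowbound _ _ rr).
apply: (@eigen_indep N a b ha _ tt rr).
- move=> x y /eqP; rewrite /tt nth_uniq // => /eqP; exact: val_inj.
- by move=> j; case: (hr j).
- by move=> j; case: (hr j).
Qed.

Lemma pert_seq N (a b : 'I_N -> L) : lin_indep a ->
  exists s : seq F, forall t, t \notin s -> lin_indep (fun i => a i + t *: b i).
Proof.
move=> ha.
have key : forall (k : nat) (s : seq F), uniq s ->
    (forall t, t \in s -> ~ lin_indep (fun i => a i + t *: b i)) -> (N < size s + k)%N ->
    exists s' : seq F, forall t, ~ lin_indep (fun i => a i + t *: b i) -> t \in s'.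
  elim => [|k IH] s us hs.
    by rewrite addn0 ltnNge (pert_bound ha us hs).
  move=> hk.
  case: (classic (forall t, ~ lin_indep (fun i => a i + t *: b i) -> t \in s)) => hc.
    by exists s.
  have [t ht] := not_all_ex_not _ _ hc.
  have [bt tn] := imply_to_and _ _ ht.
  apply: (IH (t :: s)).
  - by rewrite /= us andbT; apply/negP.
  - by move=> x; rewrite inE => /orP [/eqP -> //|]; exact: hs.
  - by rewrite /= addSnnS.
have [s' hs'] := key N.+1 [::] is_true_true (fun t (h : t \in [::]) => False_ind _ (notF h)) (leqnn _).
exists s' => t tn; apply: NNPP => hb; move: tn; rewrite hs' //.
Qed.

End Gen.

Section Lie.
Variables (F : fieldType) (L : lmodType F) (br : L -> L -> L).
Hypothesis hL : is_lie_bracket br.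

Lemma br0r x : br x 0 = 0.
Proof.
have := lie_linr hL 1 x 0 0; rewrite !scale1r addr0 => h.
by apply: (addrI (br x 0)); rewrite addr0 -h.
Qed.
Lemma br0l x : br 0 x = 0.
Proof.
have := lie_linl hL 1 0 0 x; rewrite !scale1r addr0 => h.
by apply: (addrI (br 0 x)); rewrite addr0 -h.
Qed.
Lemma brDr x y z : br x (y + z) = br x y + br x z.
Proof. by have := lie_linr hL 1 x y z; rewrite !scale1r. Qed.
Lemma brDl x y z : br (x + y) z = br x z + br y z.
Proof. by have := lie_linl hL 1 x y z; rewrite !scale1r. Qed.
Lemma brZr a x y : br x (a *: y) = a *: br x y.
Proof. by have := lie_linr hL a x y 0; rewrite !addr0 br0r addr0. Qed.
Lemma brZl a x y : br (a *: x) y = a *: br x y.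
Proof. by have := lie_linl hL a x 0 y; rewrite !addr0 br0l addr0. Qed.
Lemma brNr x y : br x (- y) = - br x y.
Proof. by rewrite -scaleN1r brZr scaleN1r. Qed.
Lemma brNl x y : br (- x) y = - br x y.
Proof. by rewrite -scaleN1r brZl scaleN1r. Qed.
Lemma br_anti x y : br x y = - br y x.
Proof.
have := lie_alt hL (x + y); rewrite brDl !brDr !lie_alt // add0r addr0.
by move/eqP; rewrite addr_eq0 => /eqP.
Qed.
Lemma br_sumr x (I : Type) (s : seq I) (P : pred I) (f : I -> L) :
  br x (\sum_(i <- s | P i) f i) = \sum_(i <- s | P i) br x (f i).
Proof. exact: (big_morph (br x) (brDr x) (br0r x)). Qed.
Lemma br_suml x (I : Type) (s : seq I) (P : pred I) (f : I -> L) :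
  br (\sum_(i <- s | P i) f i) x = \sum_(i <- s | P i) br (f i) x.
Proof. exact: (big_morph (br^~ x) (fun a b => brDl a b x) (br0l x)). Qed.
Lemma br_sumZr x m (c : 'I_m -> F) (y : 'I_m -> L) :
  br x (\sum_(i < m) c i *: y i) = \sum_(i < m) c i *: br x (y i).
Proof. by rewrite br_sumr; apply: eq_bigr => i _; rewrite brZr. Qed.
Lemma br_sumZl x m (c : 'I_m -> F) (y : 'I_m -> L) :
  br (\sum_(i < m) c i *: y i) x = \sum_(i < m) c i *: br (y i) x.
Proof. by rewrite br_suml; apply: eq_bigr => i _; rewrite brZl. Qed.

Definition bgeI x k := exists y : 'I_k -> L, lin_indep (fun i => br x (y i)).

Lemma bgeI_breadth x k : bgeI x k -> breadth_ge br x k.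
Proof.
move=> [y hy]; exists y => c hc; apply: hy; rewrite -br_sumZr; exact: hc.
Qed.

Lemma breadth_bgeI x k : breadth_ge br x k -> bgeI x k.
Proof.
move=> [y hy]; exists y => c hc; apply: hy; rewrite /centralizer br_sumZr; exact: hc.
Qed.

End Lie.

Definition ext (T : Type) m (w : 'I_m -> T) (v : T) (i : 'I_m.+1) : T :=
  match unlift ord_max i with Some j => w j | None => v end.

Lemma widen_lift m (j : 'I_m) : widen_ord (leqnSn m) j = lift ord_max j.
Proof. by apply: val_inj; rewrite /= /bump leqNgt ltn_ord. Qed.

Lemma ext_widen (T : Type) m (w : 'I_m -> T) v j : ext w v (widen_ord (leqnSn m) j) = w j.
Proof. by rewrite /ext widen_lift liftK. Qed.

Lemma ext_max (T : Type) m (w : 'I_m -> T) v : ext w v ord_max = v.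
Proof. by rewrite /ext unlift_none. Qed.

Lemma first_fail (P : nat -> Prop) n : P 0 -> ~ P n ->
  exists m, (m < n)%N /\ P m /\ ~ P m.+1.
Proof.
elim: n => [|n IH] h0 hn; first by [].
case: (classic (P n)) => hp.
  by exists n.
have [m [hm [pm pm1]]] := IH h0 hp.
by exists m; split => //; apply: ltnW.
Qed.

Section Main.
Variables (F : fieldType) (L : lmodType F) (br : L -> L -> L).
Hypothesis hL : is_lie_bracket br.
Hypothesis hF : infinite_field F.

Lemma ext_sum m (w : 'I_m -> L) v (c : 'I_m.+1 -> F) :
  \sum_(i < m.+1) c i *: ext w v i =
  \sum_(j < m) c (widen_ord (leqnSn m) j) *: w j + c ord_max *: v.
Proof.
rewrite big_ord_recr /= ext_max; congr (_ + _); apply: eq_bigr => j _.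
by rewrite ext_widen.
Qed.

Lemma ext_indep m (w : 'I_m -> L) v : lin_indep w ->
  ~ (exists al : 'I_m -> F, v = \sum_(j < m) al j *: w j) -> lin_indep (ext w v).
Proof.
move=> hw hv c; rewrite ext_sum => hc.
have cm : c ord_max = 0.
  apply: NNPP => hcm; apply: hv.
  exists (fun j => - (c ord_max)^-1 * c (widen_ord (leqnSn m) j)).
  have e : c ord_max *: v = - \sum_(j < m) c (widen_ord (leqnSn m) j) *: w j.
    by apply/eqP; rewrite -addr_eq0 addrC hc.
  have -> : v = (c ord_max)^-1 *: (c ord_max *: v).
    by rewrite scalerA mulVf ?scale1r //; apply/eqP.
  rewrite e scalerN scaler_sumr -sumrN; apply: eq_bigr => j _.
  by rewrite scalerA mulNr scaleNr.
move: hc; rewrite cm scale0r addr0 => /hw hz.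
move=> i; case: (unliftP ord_max i) => [j ->|->] //.
by rewrite -widen_lift hz.
Qed.

Lemma ext_fun2 m (A B C : Type) (f : A -> B -> C) (w : 'I_m -> A) v (w' : 'I_m -> B) v' i :
  f (ext w v i) (ext w' v' i) = ext (fun j => f (w j) (w' j)) (f v v') i.
Proof. by rewrite /ext; case: (unlift ord_max i). Qed.

Lemma ext_fun m (A B : Type) (f : A -> B) (w : 'I_m -> A) v i :
  f (ext w v i) = ext (fun j => f (w j)) (f v) i.
Proof. by rewrite /ext; case: (unlift ord_max i). Qed.

End Main.

Section Main2.
Variables (F : fieldType) (L : lmodType F) (br : L -> L -> L).
Hypothesis hL : is_lie_bracket br.
Hypothesis hF : infinite_field F.

Lemma exists_bge (n : nat) : dim_derived_gt br ((n * (n - 1)) %/ 2)%N ->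
  exists x, bgeI br x n.
Proof.
move=> [M [hM [v [hvd hvi]]]]; apply: NNPP => hne.
have P0 : exists x, bgeI br x 0 by exists 0; exists (fun _ => 0) => c _ [].
have [m [hmn [[x [u hu]] hnot]]] := @first_fail (fun k => exists x, bgeI br x k) n P0 hne.
pose g := fun i => br x (u i).
have K1 : forall p, exists al : 'I_m -> F, br x p = \sum_(j < m) al j *: g j.
  move=> p; apply: NNPP => hp; apply: hnot; exists x; exists (ext u p).
  apply: (lin_indep_eq _ (ext_indep hu hp)) => i.
  by rewrite (ext_fun (br x)).
have K2 : forall y c, br x c = 0 -> exists al : 'I_m -> F, br y c = \sum_(j < m) al j *: g j.
  move=> y c hc; apply: NNPP => hp.
  have ha := ext_indep hu hp.
  have [s hs] := pert_seq (ext (fun j => br y (u j)) 0) ha.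
  have [t] := hF (0 :: s); rewrite inE negb_or => /andP [t0 ts].
  apply: hnot; exists (x + t *: y); exists (ext u (t^-1 *: c)).
  apply: (lin_indep_eq _ (hs t ts)) => i.
  rewrite /ext; case: (unlift ord_max i) => [j|] /=.
    by rewrite brDl // brZl.
  rewrite scaler0 addr0 brZr // brDl // brZl // hc add0r scalerA mulVf ?scale1r //.
pose us := [seq u i | i <- enum 'I_m].
pose uu k := nth 0 us k.
have uuE : forall i : 'I_m, uu i = u i.
  by move=> i; rewrite /uu /us (nth_map i) ?size_enum_ord ?ltn_ord // nth_ord_enum.
pose Ps := flatten [seq [seq br (uu i) (uu j) | j <- iota 0 i] | i <- iota 0 m].
pose s := [seq g i | i <- enum 'I_m] ++ Ps.
pose G := fun k : 'I_(size s) => nth 0 s k.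
have memG : forall w, w \in s -> fspan G w.
  move=> w ws; have := fspan_mem G (Ordinal (etrans (index_mem w s) ws)).
  by rewrite /G /= nth_index.
have gG : forall i, fspan G (g i).
  by move=> i; apply: memG; rewrite mem_cat map_f ?mem_enum.
have spanI : forall w, (exists al : 'I_m -> F, w = \sum_(j < m) al j *: g j) -> fspan G w.
  by move=> w hw; apply: (fspan_sub gG).
have pairG : forall i j : 'I_m, (j < i)%N -> fspan G (br (u i) (u j)).
  move=> i j hji; apply: memG; rewrite mem_cat; apply/orP; right.
  apply/flattenP; exists [seq br (uu i) (uu j) | j <- iota 0 i].
    by apply: map_f; rewrite mem_iota /= ltn_ord.
  by rewrite -uuE -(uuE j); apply: map_f; rewrite mem_iota.
have pairG' : forall i j : 'I_m, fspan G (br (u i) (u j)).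
  move=> i j; case: (ltngtP i j) => h.
  - by rewrite br_anti //; apply: fspanN; apply: pairG.
  - exact: pairG.
  - by rewrite (ord_inj h) lie_alt //; apply: fspan0.
have K3 : forall p q, fspan G (br p q).
  move=> p q.
  have [al ha] := K1 p; have [be hb] := K1 q.
  pose cp := p - \sum_(j < m) al j *: u j.
  pose cq := q - \sum_(j < m) be j *: u j.
  have hcp : br x cp = 0 by rewrite brDr // brNr // br_sumZr // ha subrr.
  have hcq : br x cq = 0 by rewrite brDr // brNr // br_sumZr // hb subrr.
  have ep : p = cp + \sum_(j < m) al j *: u j by rewrite /cp subrK.
  have eq : q = cq + \sum_(j < m) be j *: u j by rewrite /cq subrK.
  rewrite eq brDr // br_sumZr //; apply: fspanD; first by apply: spanI; apply: K2.
  apply: fspan_sum => j _; apply: fspanZ.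
  rewrite ep brDl // br_sumZl //; apply: fspanD.
    by rewrite br_anti //; apply: fspanN; apply: spanI; apply: K2.
  by apply: fspan_sum => i _; apply: fspanZ.
have vG : forall j, fspan G (v j).
  by move=> j; have [t ->] := hvd j; apply: fspan_sum => pr _; exact: K3.
have hb := fspan_bound hvi vG.
have hs : size s = 'C(m.+1, 2).
  rewrite size_cat size_map size_enum_ord size_flatten /shape -map_comp.
  rewrite (@eq_map _ _ _ id); last by move=> i /=; rewrite size_map size_iota.
  rewrite map_id sumnE.
  have -> : \sum_(i <- iota 0 m) i = 'C(m, 2) by rewrite -bin2_sum /index_iota subn0.
  by rewrite binS bin1 addnC.
move: hM; rewrite ltnNge => /negP; apply; apply: leq_trans hb _.
rewrite hs subn1 divn2 -bin2; exact: leq_bin2l.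
Qed.

End Main2.

Section Cover.
Variables (F : fieldType) (L : lmodType F) (br : L -> L -> L).
Hypothesis hL : is_lie_bracket br.
Hypothesis hF : infinite_field F.

Lemma line_avoid (k : nat) (T : 'I_k -> F -> Prop) : (forall i, exists t, ~ T i t) ->
  (forall i t1 t2 t, T i t1 -> T i t2 -> t1 != t2 -> T i t) ->
  exists l : seq F, forall t, t \notin l -> forall i, ~ T i t.
Proof.
move=> hw hc.
pose e i := epsilon (inhabits (0 : F)) (T i).
exists [seq e i | i <- enum 'I_k] => t tn i hT.
have he : T i (e i) := epsilon_spec _ _ (ex_intro _ t hT).
have ne : e i != t.
  by apply: contraNneq tn => <-; rewrite map_f ?mem_enum.
have [t' ht'] := hw i; apply: ht'; exact: (hc i (e i) t).
Qed.

Lemma sub_line (S : L -> Prop) : lie_subalgebra br S -> forall a d t1 t2 t,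
  S (a + t1 *: d) -> S (a + t2 *: d) -> t1 != t2 -> S (a + t *: d).
Proof.
case => h0 hD hZ _ a d t1 t2 t h1 h2 ne.
have hN w : S w -> S (- w) by move=> hw; rewrite -scaleN1r; apply: hZ.
have hd : S d.
  have -> : d = (t1 - t2)^-1 *: ((a + t1 *: d) + - (a + t2 *: d)).
    rewrite opprD addrACA subrr add0r -scalerBl scalerA mulVf ?scale1r //.
    by rewrite subr_eq0.
  by apply: hZ; apply: hD => //; apply: hN.
have ha : S a.
  have -> : a = (a + t1 *: d) + - (t1 *: d) by rewrite addrK.
  by apply: hD => //; apply: hN; apply: hZ.
by apply: hD => //; apply: hZ.
Qed.

Lemma avoid (k : nat) (S : 'I_k -> L -> Prop) :
  (forall i, lie_subalgebra br (S i) /\ proper_subset_pred (S i)) ->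
  exists p, forall i, ~ S i p.
Proof.
move=> hS.
suff : forall j, (j <= k)%N -> exists p, forall i : 'I_k, (i < j)%N -> ~ S i p.
  by move=> /(_ k (leqnn k)) [p hp]; exists p => i; apply: hp.
elim => [|j IH] hj.
  by exists 0.
have [p hp] := IH (ltnW hj).
have [z hz] := (hS (Ordinal hj)).2.
pose T := (fun (i : 'I_k) t => (i < j.+1)%N /\ S i (p + t *: (z - p))).
have w1 : forall i, exists t, ~ T i t.
  move=> i; case: (ltngtP i j) => h.
  + by exists 0 => [[_]]; rewrite scale0r addr0; apply: hp.
  + by exists 0 => [[hi _]]; move: hi; rewrite ltnS leqNgt h.
  + exists 1 => [[_]]; rewrite scale1r addrC subrK.
    by have -> : i = Ordinal hj by apply: ord_inj.
have w2 : forall i t1 t2 t, T i t1 -> T i t2 -> t1 != t2 -> T i t.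
  move=> i t1 t2 t [hi h1] [_ h2] ne; split => //.
  exact: (sub_line (hS i).1 t h1 h2 ne).
have [l hl] := line_avoid w1 w2.
have [t ht] := hF l.
by exists (p + t *: (z - p)) => i hi hS'; apply: (hl t ht i).
Qed.

End Cover.

Theorem theorem1p1 (F : fieldType) (L : lmodType F) (br : L -> L -> L)
  (hF : infinite_field F) (hL : is_lie_bracket br) (hnil : nilpotent_lie br)
  (n : nat) (hdim : dim_derived_gt br ((n * (n - 1)) %/ 2)%N) :
  ~ (exists (k : nat) (S : 'I_k -> L -> Prop),
       (forall i, lie_subalgebra br (S i) /\ proper_subset_pred (S i)) /\
       (forall x : L, breadth_ge br x n -> exists i, S i x)).
Proof.
move=> [k [S [hS hcov]]].
have [x0 [y hy]] := exists_bge hL hF hdim.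
have [p hp] := avoid hF hS.
have [s0 hs0] := pert_seq (fun i => br (p - x0) (y i)) hy.
pose T := (fun (i : 'I_k) t => S i (x0 + t *: (p - x0))).
have w1 : forall i, exists t, ~ T i t.
  by move=> i; exists 1; rewrite /T scale1r addrC subrK; apply: hp.
have w2 : forall i t1 t2 t, T i t1 -> T i t2 -> t1 != t2 -> T i t.
  move=> i t1 t2 t h1 h2 ne; exact: (sub_line (hS i).1 t h1 h2 ne).
have [l hl] := line_avoid w1 w2.
have [t] := hF (l ++ s0); rewrite mem_cat negb_or => /andP [tl ts].
have : breadth_ge br (x0 + t *: (p - x0)) n.
  apply: (bgeI_breadth hL); exists y.
  apply: (lin_indep_eq _ (hs0 t ts)) => i.
  by rewrite [in RHS]brDl // [in RHS]brZl.
by move/hcov => [i hi]; apply: (hl t tl i).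
Qed.
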